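(* Let $d\ge3$, $\beta>0$, $g:\mathbb{R}^d\to\mathbb{R}$ Lipschitz. There are positive constants $C_1,C_2$ depending only on $d,\beta,g$ such that for any $\varepsilon>0$, $t\in\mathbb{Z}_{\ge0}$ and $x,y\in\mathbb{Z}^d$, \[ |G_\varepsilon(t,x)-G_\varepsilon(t,y)|\le C_1\varepsilon|x-y|e^{C_2(\varepsilon|x|+\varepsilon|y|+\varepsilon^2t)}. \]
   Context: $\{S_n\}_{n\ge0}$ is simple symmetric random walk on $\mathbb{Z}^d$ started at the origin; $g_\varepsilon(x)=g(\varepsilon x)$ and $G_\varepsilon(t,x)=\mathbb{E}(e^{\beta g_\varepsilon(S_t+x)})$ for $t\in\mathbb{Z}_{\ge0}$, $x\in\mathbb{Z}^d$. *)

(* Defs.v *)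
From mathcomp Require Import all_boot all_order all_algebra.
From mathcomp Require Import all_classical all_reals all_analysis.
Set Implicit Arguments. Unset Strict Implicit. Unset Printing Implicit Defensive.
Import Order.TTheory GRing.Theory Num.Theory.
Local Open Scope ring_scope.

(* Points of R^d are functions 'I_d -> R; points of Z^d are functions 'I_d -> int. *)

Definition enorm {R : realType} (d : nat) (v : 'I_d -> R) : R :=
  Num.sqrt (\sum_(i < d) v i ^+ 2).

Definition znorm {R : realType} (d : nat) (x : 'I_d -> int) : R :=
  enorm (fun i => (x i)%:~R).

Definition eucl_lipschitz {R : realType} (d : nat) (g : ('I_d -> R) -> R) : Prop :=
  exists L : R, forall u v, `|g u - g v| <= L * enorm (fun i => u i - v i).

Definition stepv (d : nat) (s : 'I_d * bool) : 'I_d -> int :=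
  fun j => if j == s.1 then (if s.2 then 1 else -1) else 0.

Definition endpoint (d t : nat) (w : t.-tuple ('I_d * bool)) : 'I_d -> int :=
  fun j => \sum_(s <- w) stepv s j.

(* Expectation of f(S_t) for simple symmetric random walk S on Z^d started at 0:
   the 2d^t step sequences of length t are equally likely. *)
Definition srw_expect {R : realType} (d t : nat) (f : ('I_d -> int) -> R) : R :=
  (\sum_(w : t.-tuple ('I_d * bool)) f (endpoint w)) / ((2 * d) ^ t)%:R.

Definition Geps {R : realType} (d : nat) (beta : R) (g : ('I_d -> R) -> R)
  (eps : R) (t : nat) (x : 'I_d -> int) : R :=
  srw_expect t (fun s => expR (beta * g (fun j => eps * (s j + x j)%:~R))).

(* Main.v *)
Require Import Defs.
From mathcomp Require Import all_boot all_order all_algebra.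
From mathcomp Require Import all_classical all_reals all_analysis.
From mathcomp Require Import ring lra.
Import Order.TTheory GRing.Theory Num.Theory.
Local Open Scope ring_scope.

Set Implicit Arguments. Unset Strict Implicit.
Section S.
Variable R : realType.

Definition hh (c : R) (u : int) : R := expR (c * u%:~R) + expR (- (c * u%:~R)).
Definition PP d (c : R) (z : 'I_d -> int) : R := \prod_(i < d) hh c (z i).

Lemma hh_shift c u : hh c (u + 1) + hh c (u - 1) = (expR c + expR (- c)) * hh c u.
Proof.
rewrite /hh !intrD !mulrDr !opprD !expRD mulrN1z mulrN !opprK mulr1.
ring.
Qed.

Lemma hh_ge0 c u : 0 <= hh c u.
Proof. by rewrite /hh addr_ge0 // expR_ge0. Qed.

Lemma step_sum d c (z : 'I_d -> int) :
  \sum_(s : 'I_d * bool) PP c (fun j => stepv s j + z j)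
  = (d%:R * (expR c + expR (- c))) * PP c z.
Proof.
rewrite -(pair_big predT predT (fun i b => PP c (fun j => stepv (i, b) j + z j))) /=.
transitivity (\sum_(i < d) (expR c + expR (- c)) * PP c z).
  apply: eq_bigr => i _.
  have E : forall b, \prod_(j < d | j != i) hh c (stepv (i, b) j + z j)
                   = \prod_(j < d | j != i) hh c (z j).
    move=> b; apply: eq_bigr => j /negPf ji.
    by rewrite /stepv ji add0r.
  have D : forall f : 'I_d -> R, \prod_(j < d) f j = f i * \prod_(j < d | j != i) f j.
    by move=> f; rewrite (bigD1 i).
  have BB : forall F : bool -> R, \sum_(b : bool) F b = F true + F false.
    by move=> F; rewrite big_bool.
  rewrite (BB (fun b => PP c (fun j => stepv (i, b) j + z j))).
  rewrite /PP.
  rewrite (D (fun j => hh c (stepv (i,true) j + z j))).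
  rewrite (D (fun j => hh c (stepv (i,false) j + z j))).
  rewrite (D (fun j => hh c (z j))) (E true) (E false).
  have ->: stepv (i, true) i = 1 by rewrite /stepv eqxx.
  have ->: stepv (i, false) i = -1 by rewrite /stepv eqxx.
  by rewrite -mulrDl (addrC 1) (addrC (-1)) hh_shift -mulrA.
by rewrite sumr_const card_ord -mulrA mulr_natl.
Qed.

Lemma sum_tuple_cons (T : finType) (t : nat) (F : (t.+1).-tuple T -> R) :
  \sum_(w : (t.+1).-tuple T) F w = \sum_(s : T) \sum_(w : t.-tuple T) F [tuple of s :: w].
Proof.
rewrite pair_big /=.
rewrite (reindex (fun p : T * t.-tuple T => [tuple of p.1 :: p.2])) //=.
apply: onW_bij.
exists (fun w : (t.+1).-tuple T => (thead w, [tuple of behead w])).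
  by case=> s w /=; congr pair; apply: val_inj.
move=> w; apply: val_inj => /=.
by case: w => -[|a s] //= _.
Qed.

Lemma endpoint_cons d t (s : 'I_d * bool) (w : t.-tuple ('I_d * bool)) j :
  endpoint [tuple of s :: w] j = stepv s j + endpoint w j.
Proof. by rewrite /endpoint big_cons. Qed.

Lemma sum_PP d c t (z : 'I_d -> int) :
  \sum_(w : t.-tuple ('I_d * bool)) PP c (fun j => endpoint w j + z j)
  = (d%:R * (expR c + expR (- c))) ^+ t * PP c z.
Proof.
elim: t z => [|t IH] z.
  rewrite (eq_bigr (fun _ => PP c z)); last first.
    move=> w _; rewrite (tuple0 w); congr PP; apply: funext => j.
    by rewrite /endpoint big_nil add0r.
  by rewrite sumr_const card_tuple expn0 expr0 mul1r.
rewrite sum_tuple_cons.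
transitivity (\sum_s \sum_(w : t.-tuple ('I_d * bool)) PP c (fun j => endpoint w j + (stepv s j + z j))).
  apply: eq_bigr => s _; apply: eq_bigr => w _; congr PP; apply: funext => j.
  by rewrite endpoint_cons -addrA addrCA.
under eq_bigr do rewrite IH.
rewrite -mulr_sumr step_sum exprS; ring.
Qed.

Lemma expR_tan (a b : R) : expR a * (1 + (b - a)) <= expR b.
Proof.
have h := expR_ge1Dx (b - a).
have -> : expR b = expR a * expR (b - a) by rewrite -expRD addrC subrK.
by rewrite ler_wpM2l // expR_ge0.
Qed.

Lemma exp_diff (a b : R) : `|expR a - expR b| <= `|a - b| * (expR a + expR b).
Proof.
have F1 := expR_tan a b; have F2 := expR_tan b a.
have ea := expR_gt0 a; have eb := expR_gt0 b.
case: (lerP b a) => h.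
  have -> : `|expR a - expR b| = expR a - expR b.
    apply: ger0_norm; have : expR b <= expR a by rewrite ler_expR.
    lra.
  nra.
have -> : `|expR a - expR b| = - (expR a - expR b).
  apply: ltr0_norm; have : expR a < expR b by rewrite ltr_expR.
  lra.
nra.
Qed.

Lemma cosh_bound (c : R) : 0 <= c -> expR c + expR (- c) <= 2 * expR (2 * c ^+ 2).
Proof.
move=> c0.
have E2 := expR_ge1Dx (2 * c ^+ 2).
have ab : expR c * expR (- c) = 1 by rewrite -expRD subrr expR0.
have ea := expR_gt0 c; have eb := expR_gt0 (- c).
case: (lerP c 1) => c1.
  have hk : expR (c / 2) * expR (- (c / 2)) = 1 by rewrite -expRD subrr expR0.
  have kb := expR_ge1Dx (- (c / 2)).
  have hp := expR_gt0 (c / 2).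
  have ah : expR c = expR (c / 2) * expR (c / 2).
    by rewrite -expRD -splitr.
  have h2 : expR (c / 2) <= 2 by nra.
  have a4 : expR c <= 4 by nra.
  have F := expR_tan c 0.
  rewrite expR0 in F.
  have am1 : expR c - 1 <= c * expR c by nra.
  have a1 : 1 <= expR c by rewrite -expR0 ler_expR.
  have key : expR c + expR (- c) - 2 = (expR c - 1) ^+ 2 * expR (- c) by nra.
  have : (expR c - 1) ^+ 2 * expR (- c) <= c ^+ 2 * expR c.
    have : (expR c - 1) ^+ 2 <= (c * expR c) ^+ 2.
      by apply: lerXn2r; rewrite ?nnegrE; nra.
    nra.
  nra.
have : expR (- c) <= expR c by rewrite ler_expR; lra.
have : expR c <= expR (2 * c ^+ 2) by rewrite ler_expR; nra.
lra.
Qed.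

Lemma sqrt_sum_le d (v : 'I_d -> R) : Num.sqrt (\sum_i v i ^+ 2) <= \sum_i `|v i|.
Proof.
have : \sum_i v i ^+ 2 <= (\sum_i `|v i|) ^+ 2 /\ 0 <= \sum_i `|v i|.
  elim/big_ind2: _ => [| x1 x2 y1 y2 [h1 p1] [h2 p2] | i _].
  - by rewrite expr0n /=; split.
  - split; nra.
  - by rewrite real_normK ?num_real; split.
move=> [h p]; rewrite -[X in _ <= X](ger0_norm p) -sqrtr_sqr ler_sqrt //.
exact: sqr_ge0.
Qed.

Lemma coord_le d (v : 'I_d -> R) i : `|v i| <= Num.sqrt (\sum_j v j ^+ 2).
Proof.
rewrite -sqrtr_sqr ler_sqrt ?sumr_ge0 //; last by move=> j _; exact: sqr_ge0.
rewrite (bigD1 i) //= lerDl sumr_ge0 // => j _; exact: sqr_ge0.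
Qed.

Lemma enormZ d (e : R) (v : 'I_d -> R) : enorm (fun i => e * v i) = `|e| * enorm v.
Proof.
rewrite /enorm (eq_bigr (fun i => e ^+ 2 * v i ^+ 2)); last by move=> i _; rewrite exprMn.
by rewrite -mulr_sumr sqrtrM ?sqr_ge0 // sqrtr_sqr.
Qed.

Lemma hh0 c : hh c 0 = 2.
Proof. by rewrite /hh mulr0 oppr0 expR0. Qed.

Lemma PP0 d c : PP c (fun _ : 'I_d => 0) = 2 ^+ d.
Proof.
rewrite /PP (eq_bigr (fun _ => 2)); last by move=> i _; rewrite hh0.
by rewrite prodr_const card_ord. Qed.

Lemma PP_ge0 d c (z : 'I_d -> int) : 0 <= PP c z.
Proof. by apply: prodr_ge0 => i _; exact: hh_ge0. Qed.

Lemma exp_l1_le_PP d c (z : 'I_d -> int) : 0 <= c ->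
  expR (c * \sum_i `|(z i)%:~R : R|) <= PP c z.
Proof.
move=> c0; rewrite mulr_sumr expR_sum /PP; apply: ler_prod => i _.
rewrite expR_ge0 /= /hh.
have e1 := expR_ge0 (c * (z i)%:~R); have e2 := expR_ge0 (- (c * (z i)%:~R)).
case: (lerP 0 ((z i)%:~R : R)) => h.
  by rewrite (ger0_norm h); lra.
by rewrite (ltr0_norm h) mulrN; lra.
Qed.

Lemma avg_PP d c t : 0 <= c -> (0 < d)%N ->
  (\sum_(w : t.-tuple ('I_d * bool)) PP c (endpoint w)) / ((2 * d) ^ t)%:R
  <= 2 ^+ d * expR (2 * c ^+ 2) ^+ t.
Proof.
move=> c0 d0.
have -> : \sum_(w : t.-tuple ('I_d * bool)) PP c (endpoint w)
        = \sum_(w : t.-tuple ('I_d * bool)) PP c (fun j => endpoint w j + (fun _ => 0) j).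
  by apply: eq_bigr => w _; congr PP; apply: funext => j; rewrite addr0.
rewrite sum_PP PP0.
have Np : 0 < ((2 * d) ^ t)%:R :> R by rewrite ltr0n expn_gt0 muln_gt0 d0.
rewrite ler_pdivrMr //.
have hA := cosh_bound c0.
set A := expR c + expR (- c) in hA *.
set E := expR (2 * c ^+ 2) in hA *.
have A0 : 0 <= A by rewrite /A addr_ge0 // expR_ge0.
have dp : 0 <= d%:R :> R by [].
have : (d%:R * A) ^+ t <= (d%:R * (2 * E)) ^+ t.
  apply: lerXn2r; rewrite ?nnegrE ?mulr_ge0 //.
    exact: expR_ge0.
  by rewrite ler_wpM2l.
move=> h.
have eq : (d%:R * (2 * E)) ^+ t = E ^+ t * ((2 * d) ^ t)%:R.
  by rewrite natrX natrM -exprMn; congr (_ ^+ _); ring.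
have P2 : 0 <= 2 ^+ d :> R by rewrite exprn_ge0.
by rewrite -mulrA -eq mulrC; apply: ler_wpM2l.
Qed.
Lemma a_bound d (g : ('I_d -> R) -> R) (L beta eps : R) (s x : 'I_d -> int) :
  0 <= L -> 0 <= beta -> 0 <= eps ->
  (forall u v, `|g u - g v| <= L * enorm (fun i => u i - v i)) ->
  beta * g (fun j => eps * (s j + x j)%:~R) <=
  beta * `|g (fun _ => 0)| + beta * L * eps * (\sum_j `|(s j)%:~R : R|)
  + beta * L * eps * d%:R * znorm x.
Proof.
move=> L0 b0 e0 HL.
set u := fun j => _.
have h1 : g u <= `|g (fun _ => 0)| + L * enorm (fun i => u i - 0).
  have := HL u (fun _ => 0); have := ler_norm (g (fun _ => 0)).
  rewrite ler_norml => h /andP [_ hh']; lra.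
have h2 : enorm (fun i => u i - 0) <= eps * (\sum_j `|(s j)%:~R : R|) + eps * d%:R * znorm x.
  apply: le_trans (sqrt_sum_le _) _.
  rewrite (eq_bigr (fun j => eps * `|((s j + x j)%:~R : R)|)); last first.
    by move=> j _; rewrite subr0 /u normrM (ger0_norm e0).
  rewrite -mulr_sumr -mulrA -mulrDr; apply: ler_wpM2l => //.
  have hs : \sum_j `|((s j + x j)%:~R : R)| <= \sum_j (`|(s j)%:~R : R| + znorm x).
    apply: ler_sum => j _; rewrite intrD; apply: le_trans (ler_normD _ _) _.
    by rewrite lerD2l; apply: (coord_le (fun i => (x i)%:~R : R)).
  apply: le_trans hs _.
  by rewrite big_split /= sumr_const card_ord mulr_natl.
have h3 := ler_wpM2l L0 h2.
have h4 := ler_wpM2l b0 h3.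
have h5 := ler_wpM2l b0 h1.
rewrite mulrDr in h5.
lra.
Qed.

End S.

Unset Implicit Arguments.
Lemma le_eq_trans {R : realType} {a b c e : R} : a = b -> b <= c -> c = e -> a <= e.
Proof. by move=> -> h <-. Qed.

Theorem lemma5p2 (R : realType) (d : nat) (beta : R) (g : ('I_d -> R) -> R) :
  (3 <= d)%N -> 0 < beta -> eucl_lipschitz g ->
  exists C1 C2 : R, 0 < C1 /\ 0 < C2 /\
    forall (eps : R) (t : nat) (x y : 'I_d -> int), 0 < eps ->
      `|Geps beta g eps t x - Geps beta g eps t y|
        <= C1 * eps * znorm (fun i => x i - y i)
           * expR (C2 * (eps * znorm x + eps * znorm y + eps ^+ 2 * t%:R)).
Proof.
move=> d3 bpos [L0 HL0].
set L := `|L0| + 1.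
have L1 : 1 <= L by rewrite /L lerDr.
have Lp : 0 < L by lra.
have HL : forall u v, `|g u - g v| <= L * enorm (fun i => u i - v i).
  move=> u v; apply: le_trans (HL0 u v) _; apply: ler_wpM2r; first exact: sqrtr_ge0.
  have := ler_norm L0; rewrite /L; lra.
set K := expR (beta * `|g (fun _ => 0)|).
have Kp : 0 < K by exact: expR_gt0.
have dp : 0 < d%:R :> R by rewrite ltr0n; by case: (d) d3.
exists (beta * L * (2 * K * 2 ^+ d)), (beta * L * d%:R + 2 * (beta * L) ^+ 2).
split; first by rewrite !mulr_gt0 // exprn_gt0.
split; first by rewrite addr_gt0 // ?mulr_gt0 // exprn_gt0 // mulr_gt0.
move=> eps t x y epos.
have c0 : 0 <= beta * L * eps by rewrite !mulr_ge0 // ltW.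
have zx0 : 0 <= znorm x :> R by exact: sqrtr_ge0.
have zy0 : 0 <= znorm y :> R by exact: sqrtr_ge0.
have zd0 : 0 <= znorm (fun i => x i - y i) :> R by exact: sqrtr_ge0.
set Exy := expR (beta * L * eps * d%:R * (znorm x + znorm y)).
have Exy0 : 0 < Exy by exact: expR_gt0.
set B := beta * L * eps * znorm (fun i => x i - y i) * (2 * K * Exy).
have pw : forall w : t.-tuple ('I_d * bool),
   `|expR (beta * g (fun j => eps * (endpoint w j + x j)%:~R))
     - expR (beta * g (fun j => eps * (endpoint w j + y j)%:~R))| <= B * PP (beta * L * eps) (endpoint w).
  move=> w; set s := endpoint w.
  apply: le_trans (exp_diff _ _) _.
  have hab : `|beta * g (fun j => eps * (s j + x j)%:~R) - beta * g (fun j => eps * (s j + y j)%:~R)|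
             <= beta * L * eps * znorm (fun i => x i - y i).
    rewrite -mulrBr normrM (gtr0_norm bpos) -!mulrA; apply: ler_wpM2l; first exact: ltW.
    apply: le_trans (HL _ _) _.
    have -> : (fun i => eps * (s i + x i)%:~R - eps * (s i + y i)%:~R)
            = (fun i => eps * ((x i - y i)%:~R : R)).
      by apply: funext => i; rewrite !intrD; ring.
    by rewrite enormZ (gtr0_norm epos) mulrA.
  have ha := a_bound s x (ltW Lp) (ltW bpos) (ltW epos) HL.
  have hb := a_bound s y (ltW Lp) (ltW bpos) (ltW epos) HL.
  have eS := exp_l1_le_PP s c0.
  set S := \sum_j `|(s j)%:~R : R| in ha hb eS.
  have ea : expR (beta * g (fun j => eps * (s j + x j)%:~R)) <= K * expR (beta * L * eps * S) * Exy.
    rewrite /K /Exy -!expRD ler_expR.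
    have : 0 <= beta * L * eps * d%:R * znorm y by rewrite !mulr_ge0 // ltW.
    move: ha; rewrite !mulrDr. lra.
  have eb : expR (beta * g (fun j => eps * (s j + y j)%:~R)) <= K * expR (beta * L * eps * S) * Exy.
    rewrite /K /Exy -!expRD ler_expR.
    have : 0 <= beta * L * eps * d%:R * znorm x by rewrite !mulr_ge0 // ltW.
    move: hb; rewrite !mulrDr. lra.
  have eS2 : K * expR (beta * L * eps * S) * Exy <= K * PP (beta * L * eps) s * Exy.
    by rewrite ler_wpM2r ?ler_wpM2l // ltW.
  have sum2 : expR (beta * g (fun j => eps * (s j + x j)%:~R)) + expR (beta * g (fun j => eps * (s j + y j)%:~R))
              <= 2 * K * Exy * PP (beta * L * eps) s.
    have -> : 2 * K * Exy * PP (beta * L * eps) s = K * PP (beta * L * eps) s * Exy + K * PP (beta * L * eps) s * Exy by ring.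
    apply: lerD; exact: le_trans eS2.
  apply: le_trans (ler_pM (normr_ge0 _) _ hab sum2) _.
    by rewrite addr_ge0 // expR_ge0.
  by rewrite /B !mulrA le_refl.
have Np : 0 < ((2 * d) ^ t)%:R :> R.
  by rewrite ltr0n expn_gt0 muln_gt0 /=; case: (d) d3.
have Ni : 0 <= (((2 * d) ^ t)%:R : R)^-1 by rewrite invr_ge0 ltW.
rewrite /Geps /srw_expect -mulrBl -sumrB normrM (ger0_norm Ni).
have hs : `|\sum_(w : t.-tuple ('I_d * bool)) (expR (beta * g (fun j => eps * (endpoint w j + x j)%:~R))
     - expR (beta * g (fun j => eps * (endpoint w j + y j)%:~R)))|
   <= B * \sum_(w : t.-tuple ('I_d * bool)) PP (beta * L * eps) (endpoint w).
  apply: le_trans (ler_norm_sum _ _ _) _.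
  rewrite mulr_sumr; apply: ler_sum => w _; exact: pw.
apply: le_trans (ler_wpM2r Ni hs) _.
have hav := avg_PP t c0 (ltn_trans (isT : (0 < 2)%N) d3).
have B0 : 0 <= B by rewrite /B !mulr_ge0 // ?ltW //.
have hh := ler_wpM2l B0 hav; move: hh; rewrite !mulrA => hh; apply: le_trans hh _.
rewrite -expRM_natr /B /Exy.
set C2 := beta * L * d%:R + 2 * (beta * L) ^+ 2.
have hE : expR (beta * L * eps * d%:R * (znorm x + znorm y)) * expR (2 * (beta * L * eps) ^+ 2 * t%:R)
          <= expR (C2 * (eps * znorm x + eps * znorm y + eps ^+ 2 * t%:R)).
  rewrite -expRD ler_expR /C2.
  have t0 : 0 <= t%:R :> R by [].
  have q1 : 0 <= beta * L * d%:R * (eps ^+ 2 * t%:R) by rewrite !mulr_ge0 // ?ltW.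
  have q2 : 0 <= 2 * (beta * L) ^+ 2 * (eps * znorm x + eps * znorm y).
    by rewrite !mulr_ge0 // ?addr_ge0 // ?mulr_ge0 // ?ltW // sqr_ge0.
  have -> : beta * L * eps * d%:R * (znorm x + znorm y) + 2 * (beta * L * eps) ^+ 2 * t%:R
          = beta * L * d%:R * (eps * znorm x + eps * znorm y) + 2 * (beta * L) ^+ 2 * (eps ^+ 2 * t%:R).
    by ring.
  have -> : (beta * L * d%:R + 2 * (beta * L) ^+ 2) * (eps * znorm x + eps * znorm y + eps ^+ 2 * t%:R)
     = (beta * L * d%:R * (eps * znorm x + eps * znorm y) + 2 * (beta * L) ^+ 2 * (eps ^+ 2 * t%:R))
       + (beta * L * d%:R * (eps ^+ 2 * t%:R) + 2 * (beta * L) ^+ 2 * (eps * znorm x + eps * znorm y)).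
    by ring.
  by rewrite lerDl addr_ge0.
have P0 : 0 <= beta * L * (2 * K * 2 ^+ d) * eps * znorm (fun i => x i - y i).
  by rewrite !mulr_ge0 // ?ltW // exprn_ge0.
have := ler_wpM2l P0 hE.
move=> h.
have eA : 2 * beta * L * eps * beta * L * eps * t%:R = 2 * (beta * L * eps) ^+ 2 * t%:R by ring.
have eB : beta * L * d%:R + 2 * beta * L * beta * L = C2 by rewrite /C2; ring.
rewrite eA eB.
apply: (le_eq_trans _ h); ring.
Qed.
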